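(* Let $\alpha=(\alpha_1,\ldots,\alpha_n)$ be a composition, $\sigma\in S_n$, and $i\in\{1,\ldots,n-1\}$ with $\alpha_i=\alpha_{i+1}$. The restriction $P_i:\mathrm{NAF}(\alpha,\sigma)\times\mathrm{NAF}(\alpha,\sigma s_i)\to\mathbb{Q}(q,t)$ is a probability map, i.e. $\sum_{U\in\mathrm{NAF}(\alpha,\sigma s_i)}P_i(T,U)=1$ for every $T\in\mathrm{NAF}(\alpha,\sigma)$.
   Context: Permutations are in one-line notation; $\sigma s_i$ is $\sigma$ with the entries in positions $i,i+1$ exchanged. A composition is a sequence of nonnegative integers. The skyline diagram is $\mathrm{dg}(\alpha)=\{(j,r):1\le j\le n,\ 1\le r\le\alpha_j\}$ ($j$ = column, $r$ = row) and the augmented diagram is $\mathrm{adg}(\alpha)=\mathrm{dg}(\alpha)\cup\{(j,0):1\le j\le n\}$ (row $0$ is the basement). For $u=(j,r)\in\mathrm{dg}(\alpha)$: $\mathrm{leg}(u)=\alpha_j-r$; the left arm set is $\{(j',r-1)\in\mathrm{adg}(\alpha):j'<j,\ \alpha_{j'}<\alpha_j\}$, the right arm set is $\{(j',r)\in\mathrm{dg}(\alpha):j'>j,\ \alpha_{j'}\le\alpha_j\}$, $\mathrm{Arm}(u)$ is their union and $\mathrm{arm}(u)=|\mathrm{Arm}(u)|$. Two boxes of $\mathrm{adg}(\alpha)$ attack each other if they are in the same row, or in consecutive rows with the box in the higher row strictly to the right of the box in the lower row. A filling of shape $\alpha$ and basement $\tau\in S_n$ is a map $T:\mathrm{adg}(\alpha)\to\{1,\ldots,n\}$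 with $T(j,0)=\tau_j$; $\mathrm{F}(\alpha,\tau)$ is the set of these, and $\mathrm{NAF}(\alpha,\tau)$ the subset of non-attacking ones (attacking boxes have distinct entries). For integers $a,b$ let $\chi(a,b)=1$ if $a>b$ and $0$ otherwise, and $\chi(a,b,c)=\chi(a,b)+\chi(b,c)-\chi(a,c)$. Fix $i$ with $\alpha_i=\alpha_{i+1}$. For a filling $T$ and $0\le r\le\alpha_i$, $\mathrm{swap}_r(T)$ exchanges the entries of boxes $(i,r)$ and $(i+1,r)$, and $\Omega_{0,h}=\mathrm{swap}_h\circ\cdots\circ\mathrm{swap}_0$. For $T\in\mathrm{NAF}(\alpha,\tau)$ and $0\le r\le\alpha_i-1$, let $a=T(i,r)$, $b=T(i+1,r)$, $c=T(i,r+1)$, $d=T(i+1,r+1)$, $A=\mathrm{arm}(i+1,r+1)$, $\ell=\mathrm{leg}(i+1,r+1)$, and define $\rho_r(T)\in\mathbb{Q}(q,t)$: if $a,b,c,d$ are distinct, $\rho_r(T)=0$ when $\chi(c,d,a)=\chi(c,d,b)$ and $\rho_r(T)=1$ when $\chi(c,d,a)=\chi(d,c,b)$; if exactly three of them are distinct, then $\rho_r(T)=0$ if $b=c$, $\rho_r(T)=1$ if $b=d$, and $\rho_r(T)=t^{1-\chi(d,a,b)}\frac{1-q^{\ell+1}t^{A+1}}{1-q^{\ell+1}t^{A+2}}$ if $a=c$; if $a=c$ and $b=d$, $\rho_r(T)=1$. Also set $\rho_{\alpha_i}(T)=0$. For $T\in\mathrm{NAF}(\alpha,\tau)$ and $U\in\mathrm{F}(\alpha,\tau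 s_i)$, $P_i(T,U)=\left(\prod_{r=0}^{h-1}\rho_r(T)\right)(1-\rho_h(T))$ if $U=\Omega_{0,h}(T)$ for some $h\in\{0,\ldots,\alpha_i\}$, and $P_i(T,U)=0$ otherwise. A probability map $\mathbf{T}\times\mathbf{U}\to\mathbb{Q}(q,t)$ is a function $P$ with $\sum_{U\in\mathbf{U}}P(T,U)=1$ for all $T\in\mathbf{T}$. *)

(* Defs.v *)
From HB Require Import structures.
From mathcomp Require Import all_boot all_order all_algebra all_fingroup.
From mathcomp Require Import fraction.
Set Implicit Arguments. Unset Strict Implicit. Unset Printing Implicit Defensive.
Import Order.TTheory GRing.Theory Num.Theory.

(* Conventions (0-indexed): columns j : 'I_n (paper column j+1), entries in
   'I_n (paper entry e+1), rows r : nat with row 0 = basement.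
   A composition of length n is alpha : 'I_n -> nat. *)

(* Q(q,t) = fraction field of Q[t][q]. *)
Definition Qqt := {fraction {poly {poly rat}}}.
Definition qv : Qqt := tofrac ('X : {poly {poly rat}}).
Definition tv : Qqt := tofrac (('X : {poly rat})%:P).

Definition rowbound n (alpha : 'I_n -> nat) : nat := \max_(j < n) alpha j.

Definition box n (alpha : 'I_n -> nat) := ('I_n * 'I_(rowbound alpha).+1)%type.

(* A filling is encoded as a finite function on candidate boxes; boxes
   outside adg(alpha) carry None, boxes of adg(alpha) carry Some entry. *)
Definition filling n (alpha : 'I_n -> nat) := {ffun box alpha -> option 'I_n}.

Definition in_adg n (alpha : 'I_n -> nat) (u : box alpha) : bool :=
  u.2 <= alpha u.1.

Definition is_filling n (alpha : 'I_n -> nat) (tau : 'S_n) (T : filling alpha) : bool :=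
  [forall u : box alpha, (T u != None) == in_adg u] &&
  [forall j : 'I_n, T (j, ord0) == Some (tau j)].

Definition attack n (alpha : 'I_n -> nat) (u v : box alpha) : bool :=
  [|| val u.2 == val v.2,
      (val v.2 == (val u.2).+1) && (val u.1 < val v.1) |
      (val u.2 == (val v.2).+1) && (val v.1 < val u.1)].

Definition nonattacking n (alpha : 'I_n -> nat) (T : filling alpha) : bool :=
  [forall u : box alpha, forall v : box alpha,
     [&& in_adg u, in_adg v, u != v & attack u v] ==> (T u != T v)].

Definition F n (alpha : 'I_n -> nat) (tau : 'S_n) : {set filling alpha} :=
  [set T | is_filling tau T].

Definition NAF n (alpha : 'I_n -> nat) (tau : 'S_n) : {set filling alpha} :=
  [set T | is_filling tau T && nonattacking T].

Definition leg n (alpha : 'I_n -> nat) (j : 'I_n) (r : nat) : nat := alpha j - r.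

Definition arm n (alpha : 'I_n -> nat) (j : 'I_n) (r : nat) : nat :=
  #|[set j' : 'I_n | [&& j' < j, alpha j' < alpha j & r - 1 <= alpha j']]| +
  #|[set j' : 'I_n | [&& j < j', alpha j' <= alpha j & 1 <= r <= alpha j']]|.

Definition chi (a b : nat) : int := (a > b)%:Z.
Definition chi3 (a b c : nat) : int := chi a b + chi b c - chi a c.

(* the value rho_r(T) from the four entries a=T(i,r), b=T(i+1,r),
   c=T(i,r+1), d=T(i+1,r+1), the arm A and leg l of (i+1,r+1).
   Patterns that cannot occur in a non-attacking filling get 0. *)
Definition rho_val (a b c d : nat) (A l : nat) : Qqt :=
  (if uniq [:: a; b; c; d] then
    (if chi3 c d a == chi3 c d b then 0%R
     else if chi3 c d a == chi3 d c b then 1%R else 0%R)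
  else if (a == c) && (b == d) then 1
  else if size (undup [:: a; b; c; d]) == 3 then
    (if b == c then 0
     else if b == d then 1
     else if a == c then
       (tv ^ (1 - chi3 d a b) * (1 - qv ^+ l.+1 * tv ^+ A.+1)
                              / (1 - qv ^+ l.+1 * tv ^+ A.+2))%R
     else 0)
  else 0)%R.

Definition entry n (alpha : 'I_n -> nat) (T : filling alpha) (j : 'I_n) (r : nat)
  : option 'I_n := T (j, inord r).

Definition rho n (alpha : 'I_n -> nat) (i i1 : 'I_n) (T : filling alpha) (r : nat) : Qqt :=
  if r < alpha i then
    match entry T i r, entry T i1 r, entry T i r.+1, entry T i1 r.+1 with
    | Some a, Some b, Some c, Some d =>
        rho_val a b c d (arm alpha i1 r.+1) (leg alpha i1 r.+1)
    | _, _, _, _ => 0%R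
    end
  else 0%R.

Definition swap n (alpha : 'I_n -> nat) (i i1 : 'I_n) (r : nat) (T : filling alpha)
  : filling alpha :=
  [ffun u : box alpha => if val u.2 == r then T (tperm i i1 u.1, u.2) else T u].

Definition Omega n (alpha : 'I_n -> nat) (i i1 : 'I_n) (h : nat) (T : filling alpha)
  : filling alpha :=
  foldl (fun T' r => swap i i1 r T') T (iota 0 h.+1).

Definition Pi n (alpha : 'I_n -> nat) (i i1 : 'I_n) (T U : filling alpha) : Qqt :=
  match [pick h : 'I_(alpha i).+1 | U == Omega i i1 h T] with
  | Some h => ((\prod_(r < h) rho i i1 T r) * (1 - rho i i1 T h))%R
  | None => 0%R
  end.

(* Main.v *)
Require Import Defs.
From HB Require Import structures.
From mathcomp Require Import all_boot all_order all_algebra all_fingroup.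
From mathcomp Require Import fraction.
From mathcomp Require Import zify.
Import GRing.Theory.
Local Open Scope ring_scope.

Lemma Omega_E n (alpha : 'I_n -> nat) (i i1 : 'I_n) h (T : filling alpha) u :
  Omega i i1 h T u = if (nat_of_ord u.2 <= h)%N then T (tperm i i1 u.1, u.2) else T u.
Proof.
elim: h u => [|h IH] u.
  by rewrite /Omega /= /swap ffunE leqn0.
have E : iota 0 h.+2 = iota 0 h.+1 ++ [:: h.+1] by rewrite -addn1 iotaD.
rewrite /Omega E foldl_cat -/(Omega i i1 h T) /= /swap ffunE.
case: eqP => [E'|Hne].
  by rewrite IH /= E' ltnn leqnn.
rewrite IH (leq_eqVlt _ h.+1) ltnS; by case: eqP.
Qed.

Lemma tele (R : comRingType) (f : nat -> R) m :
  \sum_(h < m) (\prod_(r < h) f r) * (1 - f h) = 1 - \prod_(r < m) f r.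
Proof.
elim: m => [|m IH]; first by rewrite !big_ord0 subrr.
rewrite big_ord_recr /= IH big_ord_recr /=.
by rewrite mulrBr mulr1 addrA subrK.
Qed.

Lemma tperm_val n (i i1 z : 'I_n) :
  nat_of_ord (tperm i i1 z) = if nat_of_ord z == nat_of_ord i then nat_of_ord i1 else if nat_of_ord z == nat_of_ord i1 then nat_of_ord i else nat_of_ord z.
Proof.
case: tpermP => [->|->|H1 H2]; rewrite ?eqxx //.
  by case: eqP => // /val_inj ->.
by case: eqP => [/val_inj//|_]; case: eqP => [/val_inj//|_].
Qed.

Lemma tperm_lt n (i i1 x y : 'I_n) : nat_of_ord i1 = (nat_of_ord i).+1 ->
  (x < y)%N -> ~~ ((nat_of_ord x == nat_of_ord i) && (nat_of_ord y == nat_of_ord i1)) ->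
  (tperm i i1 x < tperm i i1 y)%N.
Proof.
move=> Hi1 Hxy Hn; rewrite !tperm_val.
move: Hn Hxy Hi1; move: (nat_of_ord x) (nat_of_ord y) (nat_of_ord i) (nat_of_ord i1) => a b c d.
case: (a =P c) => [?|?]; case: (b =P c) => [?|?];
  case: (a =P d) => [?|?]; case: (b =P d) => [?|?] /=; lia.
Qed.
Arguments tperm_lt {n i i1 x y}.

Lemma alpha_tperm n (alpha : 'I_n -> nat) (i i1 z : 'I_n) : alpha i = alpha i1 ->
  alpha (tperm i i1 z) = alpha z.
Proof. by move=> Heq; case: tpermP => [->|->|]. Qed.
Arguments alpha_tperm {n alpha i i1 z}.

Lemma le_rowbound n (alpha : 'I_n -> nat) j : (alpha j <= rowbound alpha)%N.
Proof. exact (@leq_bigmax _ alpha j). Qed.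

Lemma inordK' n (alpha : 'I_n -> nat) j r : (r <= alpha j)%N ->
  nat_of_ord (inord r : 'I_(rowbound alpha).+1) = r.
Proof. move=> H; apply: inordK; rewrite ltnS. exact: leq_trans H (le_rowbound _ _ _). Qed.
Arguments inordK' {n alpha j r}.

Lemma NAF_fill n (alpha : 'I_n -> nat) tau (T : filling alpha) :
  T \in NAF alpha tau -> is_filling tau T.
Proof. by rewrite inE => /andP[]. Qed.
Arguments NAF_fill {n alpha tau T}.

Lemma NAF_na n (alpha : 'I_n -> nat) tau (T : filling alpha) (u v : box alpha) :
  T \in NAF alpha tau -> in_adg u -> in_adg v -> u != v -> attack u v -> T u != T v.
Proof.
rewrite inE => /andP[_ /forallP H] hu hv huv hatt.
by move/forallP: (H u) => /(_ v); rewrite hu hv huv hatt.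
Qed.
Arguments NAF_na {n alpha tau T u v}.

Lemma entry_some n (alpha : 'I_n -> nat) tau (T : filling alpha) j r :
  is_filling tau T -> (r <= alpha j)%N -> exists x, entry T j r = Some x.
Proof.
case/andP => /forallP H _ Hr.
move/eqP: (H (j, inord r)); rewrite /in_adg /= (inordK' Hr) Hr /entry.
by case: (T _) => [x|] // _; exists x.
Qed.
Arguments entry_some {n alpha tau T j r}.

Lemma entry_row n (alpha : 'I_n -> nat) tau (T : filling alpha) j j' r :
  T \in NAF alpha tau -> j != j' -> (r <= alpha j)%N -> (r <= alpha j')%N ->
  entry T j r != entry T j' r.
Proof.
move=> HT Hj H1 H2; apply: (NAF_na HT).
- by rewrite /in_adg /= (inordK' H1).
- by rewrite /in_adg /= (inordK' H2).
- by apply: contra Hj => /eqP [->].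
- by rewrite /attack /= eqxx.
Qed.
Arguments entry_row {n alpha tau T j j' r}.

Lemma entry_diag n (alpha : 'I_n -> nat) tau (T : filling alpha) (j j' : 'I_n) r :
  T \in NAF alpha tau -> (j < j')%N -> (r <= alpha j)%N -> (r.+1 <= alpha j')%N ->
  entry T j r != entry T j' r.+1.
Proof.
move=> HT Hj H1 H2; apply: (NAF_na HT).
- by rewrite /in_adg /= (inordK' H1).
- by rewrite /in_adg /= (inordK' H2).
- apply/eqP => -[_ /(congr1 (@nat_of_ord _))]; rewrite (inordK' H1) (inordK' H2); lia.
- by rewrite /attack /= (inordK' H1) (inordK' H2) eqxx Hj orbT.
Qed.
Arguments entry_diag {n alpha tau T j j' r}.

Lemma ord_neq n (a b : 'I_n) : a != b -> (nat_of_ord a == nat_of_ord b) = false.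
Proof. by move/negbTE. Qed.

Lemma rho_bc n (alpha : 'I_n -> nat) tau (i i1 : 'I_n) (T : filling alpha) r :
  nat_of_ord i1 = (nat_of_ord i).+1 -> alpha i = alpha i1 -> T \in NAF alpha tau ->
  (r < alpha i)%N -> entry T i1 r = entry T i r.+1 -> rho i i1 T r = 0.
Proof.
move=> Hi1 Heq HT Hr E.
have Hne : i != i1 by apply/eqP => H; move: Hi1; rewrite -H; lia.
have F := NAF_fill HT.
have Hr1 : (r.+1 <= alpha i1)%N by rewrite -Heq.
have [a Ea] := entry_some (j:=i) (r:=r) F (ltnW Hr).
have [b Eb] := entry_some (j:=i1) (r:=r) F (ltnW Hr1).
have [d Ed] := entry_some (j:=i1) (r:=r.+1) F Hr1.
have Hab := entry_row HT Hne (ltnW Hr) (ltnW Hr1).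
rewrite Ea Eb in Hab.
have Hab' : (nat_of_ord a == nat_of_ord b) = false by apply: ord_neq; apply: contra Hab => /eqP ->.
rewrite /rho Hr Ea -E Eb Ed /rho_val /= !inE eqxx /= andbF Hab' /=.
by case: ifP.
Qed.
Arguments rho_bc {n alpha tau i i1 T r}.

Lemma rho_bd n (alpha : 'I_n -> nat) tau (i i1 : 'I_n) (T : filling alpha) r :
  nat_of_ord i1 = (nat_of_ord i).+1 -> alpha i = alpha i1 -> T \in NAF alpha tau ->
  (r < alpha i)%N -> entry T i1 r = entry T i1 r.+1 -> rho i i1 T r = 1.
Proof.
move=> Hi1 Heq HT Hr E.
have Hne : i != i1 by apply/eqP => H; move: Hi1; rewrite -H; lia.
have F := NAF_fill HT.
have Hr1 : (r.+1 <= alpha i1)%N by rewrite -Heq.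
have [a Ea] := entry_some (j:=i) (r:=r) F (ltnW Hr).
have [b Eb] := entry_some (j:=i1) (r:=r) F (ltnW Hr1).
have [c Ec] := entry_some (j:=i) (r:=r.+1) F Hr.
have Hab := entry_row HT Hne (ltnW Hr) (ltnW Hr1).
have Hcb := entry_row HT Hne Hr Hr1.
have Hab' : (nat_of_ord a == nat_of_ord b) = false.
  by apply: ord_neq; apply: contra Hab; rewrite Ea Eb => /eqP ->.
have Hcb' : (nat_of_ord c == nat_of_ord b) = false.
  by apply: ord_neq; apply: contra Hcb; rewrite Ec -E Eb => /eqP ->.
rewrite /rho Hr Ea Eb Ec -E Eb /rho_val /= !inE eqxx /= !orbT /= andbF andbT.
case: eqP => [//|/eqP Hac].
rewrite Hab' Hcb' /= (eq_sym (nat_of_ord b)) Hcb'.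
by [].
Qed.
Arguments rho_bd {n alpha tau i i1 T r}.

Lemma tperm_lt2 n (i i1 x y : 'I_n) : nat_of_ord i1 = (nat_of_ord i).+1 ->
  (x < y)%N -> ~~ ((nat_of_ord x == nat_of_ord i) && (nat_of_ord y == nat_of_ord i1)) ->
  (tperm i i1 x < y)%N.
Proof.
move=> Hi1 Hxy Hn; change (nat_of_ord (tperm i i1 x) < nat_of_ord y)%N; rewrite !tperm_val.
move: Hn Hxy Hi1; move: (nat_of_ord x) (nat_of_ord y) (nat_of_ord i) (nat_of_ord i1) => a b c d.
case: (a =P c) => [?|?]; case: (b =P c) => [?|?];
  case: (a =P d) => [?|?]; case: (b =P d) => [?|?] /=; lia.
Qed.
Arguments tperm_lt2 {n i i1 x y}.

Lemma Omega_fill n (alpha : 'I_n -> nat) sigma (i i1 : 'I_n) h (T : filling alpha) :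
  alpha i = alpha i1 -> is_filling sigma T ->
  is_filling (tperm i i1 * sigma)%g (Omega i i1 h T).
Proof.
move=> Heq /andP[/forallP H1 /forallP H2]; apply/andP; split; apply/forallP.
  case=> x r; rewrite Omega_E /=; case: ifP => _.
    by have := H1 (tperm i i1 x, r); rewrite /in_adg /= alpha_tperm.
  exact: (H1 (x, r)).
by move=> j; rewrite Omega_E /= permM; exact: H2.
Qed.

Lemma Omega_D n (alpha : 'I_n -> nat) sigma (i i1 : 'I_n) h (T : filling alpha) :
  nat_of_ord i1 = (nat_of_ord i).+1 -> alpha i = alpha i1 -> T \in NAF alpha sigma ->
  (forall r, (r < h)%N -> rho i i1 T r != 0) -> rho i i1 T h != 1 ->
  forall u v : box alpha, in_adg u -> in_adg v -> nat_of_ord v.2 = (nat_of_ord u.2).+1 ->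
  (u.1 < v.1)%N -> Omega i i1 h T u != Omega i i1 h T v.
Proof.
move=> Hi1 Heq HT Hrho Hh [x r] [y r'] /=; rewrite /in_adg /= => Hu Hv Hrr Hxy.
rewrite !Omega_E /=.
have e1 : forall j, T (j, r) = entry T j r by move=> j; rewrite /entry inord_val.
have e2 : forall j, T (j, r') = entry T j (nat_of_ord r).+1 by move=> j; rewrite /entry -Hrr inord_val.
have Hne : i != i1 by apply/eqP => H; move: Hi1; rewrite -H; lia.
case Hr': (nat_of_ord r' <= h)%N.
  have -> : (nat_of_ord r <= h)%N by move: Hr'; rewrite Hrr; lia.
  case: (boolP ((nat_of_ord x == nat_of_ord i) && (nat_of_ord y == nat_of_ord i1))) => [/andP[/eqP Ex /eqP Ey] | Hn].
    have -> : x = i by apply: val_inj.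
    have -> : y = i1 by apply: val_inj.
    rewrite tpermL tpermR e1 e2; apply/negP => /eqP E.
    have Hy : y = i1 by apply: val_inj.
    have Hri : (nat_of_ord r < alpha i)%N by rewrite Heq -Hy; lia.
    have Hrh : (nat_of_ord r < h)%N by move: Hr'; rewrite Hrr; lia.
    by move: (Hrho (nat_of_ord r) Hrh); rewrite (rho_bc Hi1 Heq HT Hri E) eqxx.
  apply: (NAF_na HT); rewrite /in_adg /= ?alpha_tperm //.
    by apply/eqP => -[_ /(congr1 (@nat_of_ord _))]; lia.
  by rewrite /attack /= Hrr eqxx (tperm_lt Hi1 Hxy Hn) orbT.
case Hr: (nat_of_ord r <= h)%N.
  case: (boolP ((nat_of_ord x == nat_of_ord i) && (nat_of_ord y == nat_of_ord i1))) => [/andP[/eqP Ex /eqP Ey] | Hn].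
    have -> : x = i by apply: val_inj.
    have Hy : y = i1 by apply: val_inj.
    rewrite Hy tpermL e1 e2; apply/negP => /eqP E.
    have Hri : (nat_of_ord r < alpha i)%N by rewrite Heq -Hy; lia.
    have Hrh : nat_of_ord r = h by lia.
    by move: Hh; rewrite -Hrh (rho_bd Hi1 Heq HT Hri E) eqxx.
  apply: (NAF_na HT); rewrite /in_adg /= ?alpha_tperm //.
    by apply/eqP => -[_ /(congr1 (@nat_of_ord _))]; lia.
  by rewrite /attack /= Hrr eqxx (tperm_lt2 Hi1 Hxy Hn) orbT.
apply: (NAF_na HT); rewrite /in_adg //=.
  by apply/eqP => -[_ /(congr1 (@nat_of_ord _))]; lia.
by rewrite /attack /= Hrr eqxx Hxy orbT.
Qed.
Arguments Omega_D {n alpha sigma i i1 h T}.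

Lemma Omega_NAF n (alpha : 'I_n -> nat) sigma (i i1 : 'I_n) h (T : filling alpha) :
  nat_of_ord i1 = (nat_of_ord i).+1 -> alpha i = alpha i1 -> T \in NAF alpha sigma ->
  (forall r, (r < h)%N -> rho i i1 T r != 0) -> rho i i1 T h != 1 ->
  Omega i i1 h T \in NAF alpha (tperm i i1 * sigma)%g.
Proof.
move=> Hi1 Heq HT Hrho Hh.
rewrite inE Omega_fill ?(NAF_fill HT) //=.
apply/forallP => u; apply/forallP => v; apply/implyP => /and4P[Hu Hv Huv].
rewrite /attack => /or3P[Hrow | /andP[/eqP Hr Hx] | /andP[/eqP Hr Hx]].
- move: Hu Hv Huv Hrow; case: u => [x r]; case: v => [y r'] /= Hu Hv Huv /eqP Hrow.
  have E : r' = r by apply: val_inj.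
  subst r'; rewrite !Omega_E /=; case: ifP => _.
    apply: (NAF_na HT); rewrite /in_adg /= ?alpha_tperm //.
      by apply: contra Huv => /eqP [/perm_inj ->].
    by rewrite /attack /= eqxx.
  by apply: (NAF_na HT); rewrite /attack //= eqxx.
- exact (Omega_D Hi1 Heq HT Hrho Hh _ _ Hu Hv Hr Hx).
- rewrite eq_sym; exact (Omega_D Hi1 Heq HT Hrho Hh _ _ Hv Hu Hr Hx).
Qed.
Arguments Omega_NAF {n alpha sigma i i1 h T}.

Lemma Omega_inj n (alpha : 'I_n -> nat) sigma (i i1 : 'I_n) (T : filling alpha) (h h' : nat) :
  nat_of_ord i1 = (nat_of_ord i).+1 -> alpha i = alpha i1 -> T \in NAF alpha sigma ->
  (h <= alpha i)%N -> (h' <= alpha i)%N -> Omega i i1 h T = Omega i i1 h' T -> h = h'.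
Proof.
move=> Hi1 Heq HT.
have Hne : i != i1 by apply/eqP => H; move: Hi1; rewrite -H; lia.
wlog: h h' / (h < h')%N.
  move=> W Hh Hh' E; case: (ltngtP h h') => // H.
    exact: W.
  by apply/esym; apply: W.
move=> Hlt Hh Hh' E.
have Hh'1 : (h' <= alpha i1)%N by rewrite -Heq.
have := congr1 (fun U : filling alpha => U (i, inord h')) E.
rewrite !Omega_E /= (inordK' Hh') leqnn.
have -> : (h' <= h)%N = false by apply/negbTE; rewrite -ltnNge.
rewrite tpermL => E'; exfalso; move: (entry_row HT Hne Hh' Hh'1).
by rewrite /entry E' eqxx.
Qed.
Arguments Omega_inj {n alpha sigma i i1 T h h'}.

Theorem corollary3p7 (n : nat) (alpha : 'I_n -> nat) (sigma : 'S_n)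
    (i i1 : 'I_n) (Hi1 : val i1 = (val i).+1) (Heq : alpha i = alpha i1)
    (T : filling alpha) :
  T \in NAF alpha sigma ->
  \sum_(U in NAF alpha (tperm i i1 * sigma)%g) Pi i i1 T U = 1.
Proof.
move=> HT.
have Hi1' : nat_of_ord i1 = (nat_of_ord i).+1 := Hi1.
pose P := fun h : 'I_(alpha i).+1 => (\prod_(r < h) rho i i1 T r) * (1 - rho i i1 T h).
pose f := fun h : 'I_(alpha i).+1 => Omega i i1 h T.
have HPi : forall U, Pi i i1 T U = \sum_(h < (alpha i).+1) (U == f h)%:R * P h.
  move=> U; rewrite /Pi; case: pickP => [h /eqP Hh | H].
    rewrite (bigD1 h) ?eqxx // Hh eqxx mul1r [X in _ = _ + X]big1 ?addr0 //.
    move=> h' Hne.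
    case: eqP => [E|]; last by rewrite mul0r.
    have := Omega_inj Hi1' Heq HT (ltnSE (ltn_ord h)) (ltnSE (ltn_ord h')) E.
    by move/val_inj => E'; rewrite E' eqxx in Hne.
  by rewrite big1 // => h _; rewrite H mul0r.
rewrite (eq_bigr _ (fun U _ => HPi U)) exchange_big /=.
transitivity (\sum_(h < (alpha i).+1) P h).
  apply: eq_bigr => h _.
  rewrite -big_distrl /=.
  case: (boolP (f h \in NAF alpha (tperm i i1 * sigma)%g)) => Hin.
    rewrite (bigD1 (f h) Hin) eqxx /= big1 => [|U /andP[_ HU]]; last by rewrite (negbTE HU).
    by rewrite addr0 mul1r.
  rewrite big1 ?mul0r; last first.
    by move=> U HU; case: eqP => // E; rewrite -E HU in Hin.
  apply/esym/eqP; apply: contraNT Hin => HP.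
  move: HP; rewrite mulf_eq0 negb_or => /andP[/prodf_neq0 Hprod H1].
  apply: (Omega_NAF Hi1' Heq HT).
    by move=> r Hr; exact: (Hprod (Ordinal Hr)).
  by move: H1; rewrite subr_eq0 eq_sym.
rewrite /P /= (tele _ (fun r => rho i i1 T r) (alpha i).+1).
by rewrite big_ord_recr /= /rho ltnn mulr0 subr0.
Qed.
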